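(* Let $k\ge 1$ and let $T$ be an array whose positions $0,\dots,2k-1$ hold $n=2k$ elements, the first $k$ forming one list and the last $k$ another. Run $\textsc{Merge}(T,0,k,k)$ (defined in the context). Then the expected number of random bits it consumes to produce the merged array of size $n$ is $n+\Theta(\sqrt{n}\log n)$ as $n\to\infty$.
   Context: The procedure $\textsc{Merge}(T,s,n_1,n_2)$: set $i\gets s$, $j\gets s+n_1$, $n\gets s+n_1+n_2$. Repeat: draw an independent fair random bit; if it is $0$, then break out of the loop if $i=j$; if it is $1$, then break out of the loop if $j=n$, and otherwise swap $T[i]$ and $T[j]$ and set $j\gets j+1$; in either non-breaking case set $i\gets i+1$. After the loop, while $i<n$: draw an integer $m$ uniformly at random from $\{s,\dots,i\}$ (independently of everything else), swap $T[i]$ and $T[m]$, and set $i\gets i+1$. Cost model: each fair bit drawn in the first loop costs one random bit, and drawing a uniform integer from a set of $K$ elements costs $\lceil \log_2 K\rceil$ random bits. *)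

(* Defs.v *)
From Stdlib Require Import Reals Arith Lra.
Open Scope R_scope.

(* Cost in random bits of drawing a uniform integer from a set of K elements:
   ceil(log2 K) (Nat.log2_up K; equals 0 for K = 1). *)
Definition unif_cost (K : nat) : nat := Nat.log2_up K.

(* Cost (deterministic) of the second loop of Merge(T,s,n1,n2) started at
   index i with end index n: for each i' = i, ..., n-1 one draws m uniformly
   from {s,...,i'}, a set of i' - s + 1 elements. *)
Fixpoint tail_cost_aux (s i len : nat) : nat :=
  match len with
  | O => O
  | S l => (unif_cost (i - s + 1) + tail_cost_aux s (S i) l)%nat
  end.

Definition tail_cost (s n i : nat) : nat := tail_cost_aux s i (n - i).

(* Expected number of random bits consumed by Merge from the state (i, j)
   at the top of the first loop (with end index n), following the procedure:
   draw a fair bit (cost 1);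
   - bit 0: break if i = j, otherwise i <- i+1;
   - bit 1: break if j = n, otherwise (swap) j <- j+1, i <- i+1;
   after a break, the second loop costs tail_cost s n i.
   The bit counts and loop costs do not depend on the array contents.
   [fuel] bounds the number of first-loop iterations; fuel n - i + 1 always
   suffices (i increases at each non-breaking iteration and i <= j <= n). *)
Fixpoint merge_ecost (fuel : nat) (s n i j : nat) : R :=
  match fuel with
  | O => 0
  | S f =>
      1 + / 2 * (if Nat.eqb i j then INR (tail_cost s n i)
                 else merge_ecost f s n (S i) j)
        + / 2 * (if Nat.eqb j n then INR (tail_cost s n i)
                 else merge_ecost f s n (S i) (S j))
  end.

Definition merge_expected_bits (s n1 n2 : nat) : R :=
  merge_ecost (n1 + n2 + 1) s (s + n1 + n2) s (s + n1).

(* Main.v *)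
Require Import Defs.
From Stdlib Require Import Reals Arith Lra Lia.
Open Scope R_scope.

Fixpoint W (h : nat -> R) (c : R) (f x y : nat) : R :=
  match f with
  | O => 0
  | S f' => c + / 2 * (match x with O => h y | S x' => W h c f' x' y end)
              + / 2 * (match y with O => h x | S y' => W h c f' x y' end)
  end.

Lemma W_lin : forall f x y h1 h2 a b,
  W (fun D => a * h1 D + b * h2 D) 0 f x y = a * W h1 0 f x y + b * W h2 0 f x y.
Proof.
  induction f; intros; simpl; [ring|].
  destruct x, y; rewrite ?IHf; ring.
Qed.

Lemma W_mono (B : nat) : forall f x y h1 h2,
  (forall D, (D <= B)%nat -> h1 D <= h2 D) -> (x <= B)%nat -> (y <= B)%nat ->
  W h1 0 f x y <= W h2 0 f x y.
Proof.
  induction f; intros x y h1 h2 H Hx Hy; simpl; [lra|].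
  assert (A : (match x with O => h1 y | S x' => W h1 0 f x' y end)
            <= (match x with O => h2 y | S x' => W h2 0 f x' y end)).
  { destruct x; [apply H; lia | apply IHf; auto; lia]. }
  assert (A2 : (match y with O => h1 x | S y' => W h1 0 f x y' end)
            <= (match y with O => h2 x | S y' => W h2 0 f x y' end)).
  { destruct y; [apply H; lia | apply IHf; auto; lia]. }
  lra.
Qed.

Lemma W_harm (G : nat -> nat -> R) (h : nat -> R) :
  (forall x y, G x y = / 2 * (match x with O => h y | S x' => G x' y end)
                     + / 2 * (match y with O => h x | S y' => G x y' end)) ->
  forall m x y, (x + y = m)%nat -> W h 0 (S m) x y = G x y.
Proof.
  intros HG. induction m; intros x y Hm.
  - assert (x = 0%nat) by lia; assert (y = 0%nat) by lia; subst.
    rewrite (HG 0%nat 0%nat). simpl. ring.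
  - rewrite (HG x y). change (W h 0 (S (S m)) x y) with
      (0 + / 2 * (match x with O => h y | S x' => W h 0 (S m) x' y end)
           + / 2 * (match y with O => h x | S y' => W h 0 (S m) x y' end)).
    destruct x, y; rewrite ?IHm; try lia; ring.
Qed.

Lemma W_shift : forall m x y h, (x + y = m)%nat ->
  W h 1 (S m) x y = W (fun D => h D - INR D) 0 (S m) x y + INR (S m).
Proof.
  induction m; intros x y h Hm.
  - assert (x = 0%nat) by lia; assert (y = 0%nat) by lia; subst. simpl. ring.
  - change (W h 1 (S (S m)) x y) with
      (1 + / 2 * (match x with O => h y | S x' => W h 1 (S m) x' y end)
           + / 2 * (match y with O => h x | S y' => W h 1 (S m) x y' end)).
    change (W (fun D => h D - INR D) 0 (S (S m)) x y) with
      (0 + / 2 * (match x with O => h y - INR y | S x' => W (fun D => h D - INR D) 0 (S m) x' y end)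
           + / 2 * (match y with O => h x - INR x | S y' => W (fun D => h D - INR D) 0 (S m) x y' end)).
    destruct x, y.
    + simpl in Hm; lia.
    + rewrite IHm by lia. simpl in Hm. injection Hm as Hm. subst. idtac.
    repeat rewrite S_INR. lra.
    + rewrite IHm by lia. assert (x = m) by lia. subst. repeat rewrite S_INR. lra.
    + rewrite !IHm by lia. repeat rewrite S_INR. lra.
Qed.

Lemma bridge (n : nat) : forall m x y i j, (x + y = m)%nat -> (m <= n)%nat ->
  i = (n - x - y)%nat -> j = (n - y)%nat ->
  merge_ecost (S m) 0 n i j
  = W (fun D => INR (tail_cost 0 n (n - D))) 1 (S m) x y.
Proof.
  induction m; intros x y i j Hm Hn Hi Hj.
  - assert (x = 0%nat) by lia; assert (y = 0%nat) by lia; subst.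
    simpl. rewrite !Nat.sub_0_r, Nat.eqb_refl. reflexivity.
  - change (merge_ecost (S (S m)) 0 n i j) with
      (1 + / 2 * (if Nat.eqb i j then INR (tail_cost 0 n i)
                 else merge_ecost (S m) 0 n (S i) j)
        + / 2 * (if Nat.eqb j n then INR (tail_cost 0 n i)
                 else merge_ecost (S m) 0 n (S i) (S j))).
    simpl W.
    destruct x, y.
    + simpl in Hm; lia.
    + replace (Nat.eqb i j) with true by (symmetry; apply Nat.eqb_eq; lia).
      replace (Nat.eqb j n) with false by (symmetry; apply Nat.eqb_neq; lia).
      rewrite (IHm 0%nat y) by lia.
      replace i with (n - S y)%nat by lia. reflexivity.
    + replace (Nat.eqb i j) with false by (symmetry; apply Nat.eqb_neq; lia).
      replace (Nat.eqb j n) with true by (symmetry; apply Nat.eqb_eq; lia).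
      rewrite (IHm x 0%nat) by lia.
      replace i with (n - S x)%nat by lia. reflexivity.
    + replace (Nat.eqb i j) with false by (symmetry; apply Nat.eqb_neq; lia).
      replace (Nat.eqb j n) with false by (symmetry; apply Nat.eqb_neq; lia).
      rewrite (IHm x (S y)) by lia.
      rewrite (IHm (S x) y) by lia. reflexivity.
Qed.

Lemma tail_bounds : forall len i a b,
  (forall t, (i <= t)%nat -> (t < i + len)%nat ->
      (a <= Nat.log2_up (t + 1) <= b)%nat) ->
  (len * a <= tail_cost_aux 0 i len <= len * b)%nat.
Proof.
  induction len; intros i a b H; simpl; [lia|].
  unfold unif_cost. rewrite Nat.sub_0_r.
  assert (H1 := H i ltac:(lia) ltac:(lia)).
  assert (H2 : (len * a <= tail_cost_aux 0 (S i) len <= len * b)%nat).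
  { apply IHlen. intros t Ht1 Ht2. apply H; lia. }
  lia.
Qed.

Lemma W1 : forall m x y, (x + y = m)%nat -> W (fun _ => 1) 0 (S m) x y = 1.
Proof.
  intros. apply (W_harm (fun _ _ => 1)); auto.
  intros x' y'. destruct x', y'; lra.
Qed.

Lemma W2 : forall m x y, (x + y = m)%nat ->
  W (fun D => INR D ^ 2 + 3 * INR D) 0 (S m) x y
  = (INR x - INR y) ^ 2 + INR x + INR y.
Proof.
  intros. apply (W_harm (fun x y => (INR x - INR y) ^ 2 + INR x + INR y)); auto.
  intros x' y'. destruct x', y'; rewrite ?S_INR; simpl; lra.
Qed.

Definition G4 (x y : R) := (x - y)^4 + 6*(x+y)*(x-y)^2 + 3*(x+y)^2 - 2*(x+y).
Definition h4 (D : R) := 2 * G4 0 D - G4 0 (D - 1).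

Lemma W4 : forall m x y, (x + y = m)%nat ->
  W (fun D => h4 (INR D)) 0 (S m) x y = G4 (INR x) (INR y).
Proof.
  intros. apply (W_harm (fun x y => G4 (INR x) (INR y))); auto.
  intros x' y'. unfold h4, G4. destruct x', y'; rewrite ?S_INR; simpl; field.
Qed.

Lemma h4_ge (D : nat) : INR D ^ 4 <= h4 (INR D).
Proof.
  unfold h4, G4. destruct D.
  - simpl. lra.
  - rewrite S_INR. assert (0 <= INR D) by apply pos_INR.
    assert (E : 2 * ((0 - (INR D + 1)) ^ 4 + 6 * (0 + (INR D + 1)) * (0 - (INR D + 1)) ^ 2 +
      3 * (0 + (INR D + 1)) ^ 2 - 2 * (0 + (INR D + 1))) -
     ((0 - (INR D + 1 - 1)) ^ 4 + 6 * (0 + (INR D + 1 - 1)) * (0 - (INR D + 1 - 1)) ^ 2 +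
      3 * (0 + (INR D + 1 - 1)) ^ 2 - 2 * (0 + (INR D + 1 - 1)))
      - (INR D + 1) ^ 4 = 10 * (INR D + 1)^3 + 15 * (INR D+1)^2 - 10 * (INR D + 1)) by field.
    nra.
Qed.

Lemma W_ext : forall f x y h1 h2 c, (forall D, h1 D = h2 D) -> W h1 c f x y = W h2 c f x y.
Proof.
  induction f; intros; simpl; [reflexivity|].
  destruct x, y; rewrite ?H; rewrite ?(IHf _ _ h1 h2 c H); reflexivity.
Qed.

Lemma W_scale : forall f x y h a, W (fun D => a * h D) 0 f x y = a * W h 0 f x y.
Proof.
  induction f; intros; simpl; [ring|].
  destruct x, y; rewrite ?IHf; ring.
Qed.

Lemma W_nonneg : forall f x y h, (forall D, 0 <= h D) -> 0 <= W h 0 f x y.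
Proof.
  induction f; intros; simpl; [lra|].
  assert (0 <= match x with O => h y | S x' => W h 0 f x' y end) by (destruct x; auto).
  assert (0 <= match y with O => h x | S y' => W h 0 f x y' end) by (destruct y; auto).
  lra.
Qed.

Lemma Phi_bounds (k : nat) : (1 <= k)%nat ->
  let Phi := W (fun D => INR D) 0 (S (2 * k)) k k in
  let s := sqrt (INR k) in
  5 * s / 28 <= Phi /\ Phi <= 3 / 2 * s.
Proof.
  intros Hk Phi s.
  assert (HK : 1 <= INR k) by (apply (le_INR 1); lia).
  assert (Hs : 1 <= s). { unfold s. rewrite <- sqrt_1. apply sqrt_le_1_alt. lra. }
  assert (Hss : s * s = INR k) by (apply sqrt_sqrt; lra).
  set (Q := W (fun D => INR D ^ 2) 0 (S (2 * k)) k k).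
  assert (HQ : Q + 3 * Phi = 2 * INR k).
  { unfold Q, Phi.
    rewrite <- (W_scale _ _ _ (fun D => INR D) 3).
    rewrite <- (Rmult_1_l (W (fun D => INR D ^ 2) 0 (S (2 * k)) k k)).
    rewrite <- (W_scale _ _ _ (fun D => INR D ^ 2) 1).
    rewrite <- (Rmult_1_l (W (fun D => 1 * INR D ^ 2) 0 (S (2 * k)) k k)).
    rewrite <- (Rmult_1_l (W (fun D => 3 * INR D) 0 (S (2 * k)) k k)).
    rewrite <- W_lin.
    rewrite (W_ext _ _ _ _ (fun D => INR D ^ 2 + 3 * INR D)) by (intros; ring).
    rewrite (W2 (2 * k)) by lia. ring. }
  assert (HPhi0 : 0 <= Phi).
  { apply W_nonneg. intros; apply pos_INR. }
  split.
  - set (t := 4 * s).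
    assert (Ht : 0 < t) by (unfold t; lra).
    assert (HQle : Q <= t * Phi + / (t ^ 2) * G4 (INR k) (INR k)).
    { rewrite <- (W4 (2 * k)) by lia. unfold Q, Phi.
      rewrite <- !W_scale. rewrite <- (Rmult_1_l (W (fun D => t * INR D) 0 _ k k)).
      rewrite <- (Rmult_1_l (W (fun D => / t ^ 2 * h4 (INR D)) 0 _ k k)).
      rewrite <- W_lin. apply (W_mono k); try lia.
      intros D _. assert (H4 := h4_ge D). assert (HD := pos_INR D).
      assert (Hit : 0 < / t ^ 2) by (apply Rinv_0_lt_compat; nra).
      destruct (Rle_or_lt (INR D) t).
      + assert (INR D ^ 2 <= t * INR D) by nra.
        assert (0 <= / t ^ 2 * h4 (INR D)) by nra. nra.
      + assert (E : / t ^ 2 * INR D ^ 4 = (INR D ^ 2) * (INR D ^ 2 * / t ^ 2)) by (field; lra).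
        assert (1 <= INR D ^ 2 * / t ^ 2).
        { apply (Rmult_le_reg_r (t ^ 2)). nra. rewrite Rmult_assoc, Rinv_l by nra. nra. }
        assert (INR D ^ 2 <= / t ^ 2 * INR D ^ 4) by nra. nra. }
    assert (HG : G4 (INR k) (INR k) = 12 * INR k ^ 2 - 4 * INR k) by (unfold G4; ring).
    rewrite HG in HQle.
    assert (Ht2 : t ^ 2 = 16 * INR k) by (unfold t; nra).
    rewrite Ht2 in HQle.
    assert (E : / (16 * INR k) * (12 * INR k ^ 2 - 4 * INR k) = 3 / 4 * INR k - / 4) by (field; lra).
    rewrite E in HQle. unfold t in HQle.
    nra.
  - set (t := s).
    assert (Ht : 0 < t) by (unfold t; lra).
    assert (HPle : Phi <= / (4 * t) * Q + t * 1).
    { unfold Q, Phi.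
      rewrite <- (W1 (2 * k) k k) by lia.
      rewrite <- !W_scale.
      rewrite <- (Rmult_1_l (W (fun D => / (4 * t) * INR D ^ 2) 0 _ k k)).
      rewrite <- (Rmult_1_l (W (fun D => t * 1) 0 _ k k)).
      rewrite <- W_lin. apply (W_mono k); try lia.
      intros D _. assert (HD := pos_INR D).
      rewrite !Rmult_1_l.
      apply (Rmult_le_reg_l (4 * t)). lra.
      rewrite Rmult_plus_distr_l, <- Rmult_assoc, Rinv_r by lra. pose proof (pow2_ge_0 (INR D - 2 * t)). nra. }
    assert (Q <= 2 * INR k) by lra.
    assert (E : / (4 * t) * Q <= / (4 * t) * (2 * INR k)).
    { apply Rmult_le_compat_l; [left; apply Rinv_0_lt_compat; lra | lra]. }
    assert (E2 : / (4 * t) * (2 * INR k) = t / 2) by (unfold t; rewrite <- Hss; field; lra).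
    unfold t in *. lra.
Qed.

Lemma ln_le' : forall x y, 0 < x -> x <= y -> ln x <= ln y.
Proof.
  intros x y Hx Hxy. destruct Hxy. left; apply ln_increasing; lra. subst; lra.
Qed.

Lemma INR2pow : forall p, INR (2 ^ p) = 2 ^ p.
Proof. intros. rewrite pow_INR. reflexivity. Qed.

Lemma excess_repr (k : nat) : (1 <= k)%nat ->
  merge_expected_bits 0 k k - INR (2 * k)
  = W (fun D => INR (tail_cost 0 (2 * k) (2 * k - D)) - INR D) 0 (S (2 * k)) k k + 1.
Proof.
  intros Hk. unfold merge_expected_bits.
  replace (k + k + 1)%nat with (S (2 * k)) by lia.
  replace (0 + k + k)%nat with (2 * k)%nat by lia.
  rewrite (bridge (2 * k) (2 * k) k k) by lia.
  rewrite W_shift by lia. rewrite S_INR. ring.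
Qed.

Lemma g_bounds (k D : nat) : (1 <= k)%nat -> (D <= k)%nat ->
  INR (Nat.log2_up (k + 1)) * INR D <= INR (tail_cost 0 (2 * k) (2 * k - D))
  /\ INR (tail_cost 0 (2 * k) (2 * k - D)) <= INR (Nat.log2_up (2 * k)) * INR D.
Proof.
  intros Hk HD. unfold tail_cost.
  replace (2 * k - (2 * k - D))%nat with D by lia.
  assert (H := tail_bounds D (2 * k - D) (Nat.log2_up (k + 1)) (Nat.log2_up (2 * k))).
  destruct H as [H1 H2].
  { intros t Ht1 Ht2. split; apply Nat.log2_up_le_mono; lia. }
  split; rewrite <- mult_INR; apply le_INR; lia.
Qed.

Theorem mainTheorem2 :
  exists (c1 c2 : R) (N : nat),
    0 < c1 /\ 0 < c2 /\
    forall k : nat, (1 <= k)%nat -> (N <= k)%nat ->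
      c1 * (sqrt (INR (2 * k)) * ln (INR (2 * k)))
        <= merge_expected_bits 0 k k - INR (2 * k) /\
      merge_expected_bits 0 k k - INR (2 * k)
        <= c2 * (sqrt (INR (2 * k)) * ln (INR (2 * k))).
Proof.
  exists (1/25), 4, 8%nat. split; [lra|]. split; [lra|].
  intros k Hk H8.
  rewrite (excess_repr k Hk).
  set (Phi := W (fun D => INR D) 0 (S (2 * k)) k k).
  set (s := sqrt (INR k)).
  destruct (Phi_bounds k Hk) as [Plo Phi_up]. fold Phi s in Plo, Phi_up.
  set (l := INR (Nat.log2_up (k + 1))).
  set (L := INR (Nat.log2_up (2 * k))).
  set (Wg := W (fun D => INR (tail_cost 0 (2 * k) (2 * k - D)) - INR D) 0 (S (2 * k)) k k).
  assert (Wlo : (l - 1) * Phi <= Wg).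
  { unfold Wg, Phi. rewrite <- W_scale. apply (W_mono k); try lia.
    intros D HD. destruct (g_bounds k D Hk HD). fold l in H. lra. }
  assert (Wup : Wg <= (L - 1) * Phi).
  { unfold Wg, Phi. rewrite <- W_scale. apply (W_mono k); try lia.
    intros D HD. destruct (g_bounds k D Hk HD). fold L in H0. lra. }
  assert (HK : 8 <= INR k). { replace 8 with (INR 8) by (simpl; ring). apply le_INR; lia. }
  assert (Hs : 1 <= s). { unfold s. rewrite <- sqrt_1. apply sqrt_le_1_alt. lra. }
  rewrite mult_INR. change (INR 2) with 2.
  assert (Hsq : sqrt (2 * INR k) = sqrt 2 * s) by (apply sqrt_mult; lra).
  rewrite Hsq.
  assert (Hs2a : 1 <= sqrt 2). { rewrite <- sqrt_1. apply sqrt_le_1_alt. lra. }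
  assert (Hs2b : sqrt 2 <= 2).
  { assert (sqrt 2 * sqrt 2 = 2) by (apply sqrt_sqrt; lra). nra. }
  assert (ln2lo : / 2 < ln 2) by apply ln_lt_2.
  assert (ln2hi : ln 2 <= 1).
  { rewrite <- (ln_exp 1). apply ln_le'. lra.
    assert (H := exp_ineq1 1 ltac:(lra)). lra. }
  assert (Hln2K : ln (2 * INR k) = ln 2 + ln (INR k)) by (apply ln_mult; lra).
  assert (HlnK8 : 3 * ln 2 <= ln (INR k)).
  { replace (3 * ln 2) with (INR 3 * ln 2) by (simpl; ring).
    rewrite <- ln_pow by lra. apply ln_le'. lra. simpl. lra. }
  destruct (Nat.log2_up_spec (2 * k) ltac:(lia)) as [LA LB].
  destruct (Nat.log2_up_spec (k + 1) ltac:(lia)) as [lA lB].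
  assert (HLpos : (1 <= Nat.log2_up (2 * k))%nat).
  { destruct (Nat.log2_up (2 * k)) eqn:E; [simpl in LB; lia | lia]. }
  assert (HL1 : (L - 1) * ln 2 < ln (2 * INR k)).
  { apply lt_INR in LA. rewrite INR2pow, mult_INR in LA. change (INR 2) with 2 in LA.
    assert (E : INR (Nat.pred (Nat.log2_up (2 * k))) = L - 1).
    { unfold L. rewrite <- (Nat.succ_pred (Nat.log2_up (2 * k))) at 2 by lia.
      rewrite S_INR. ring. }
    rewrite <- E, <- ln_pow by lra. apply ln_increasing; [apply pow_lt; lra | lra]. }
  assert (Hl1 : ln (INR k) <= l * ln 2).
  { apply le_INR in lB. rewrite INR2pow, plus_INR in lB. simpl in lB.
    unfold l. rewrite <- ln_pow by lra. apply ln_le'; lra. }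
  assert (Hln1 : 1 <= ln (2 * INR k)).
  { rewrite <- (ln_exp 1). apply ln_le'. apply exp_pos.
    assert (exp 1 <= 3) by apply exp_le_3. lra. }
  assert (HPhi0 : 0 <= Phi) by lra.
  split.
  -
    assert (Hl1b : ln (2 * INR k) / 2 <= l - 1).
    { assert (A : 0 <= ln (INR k) - ln 2) by lra.
      assert ((l - 1) * ln 2 >= ln (INR k) - ln 2) by lra.
      assert (ln (INR k) - ln 2 <= l - 1).
      { destruct (Rle_or_lt 0 (l - 1)).
        - assert (0 <= (l - 1) * (1 - ln 2)) by (apply Rmult_le_pos; lra). lra.
        - assert ((l - 1) * ln 2 < 0) by (apply Rmult_neg_pos; lra). lra. }
      lra. }
    assert (Hln0 : 0 <= ln (2 * INR k)) by lra.
    assert (ln (2 * INR k) / 2 * Phi <= (l - 1) * Phi)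
      by (apply Rmult_le_compat_r; lra).
    assert (ln (2 * INR k) / 2 * (5 * s / 28) <= ln (2 * INR k) / 2 * Phi)
      by (apply Rmult_le_compat_l; lra).
    set (P := s * ln (2 * INR k)).
    assert (HP : 1 <= P) by (unfold P; nra).
    assert (E1 : sqrt 2 * s * ln (2 * INR k) = sqrt 2 * P) by (unfold P; ring).
    assert (E2 : ln (2 * INR k) / 2 * (5 * s / 28) = 5 / 56 * P) by (unfold P; field).
    assert (sqrt 2 * P <= 2 * P) by (apply Rmult_le_compat_r; lra).
    rewrite E1. lra.
  -
    assert (HLm : L - 1 <= 2 * ln (2 * INR k)).
    { destruct (Rle_or_lt (L - 1) (2 * ln (2 * INR k))); auto.
      assert (2 * ln (2 * INR k) * ln 2 <= (L - 1) * ln 2) by (apply Rmult_le_compat_r; lra).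
      assert (0 < (ln 2 - / 2) * ln (2 * INR k)) by (apply Rmult_lt_0_compat; lra).
      nra. }
    assert (HL0 : 0 <= L - 1) by (unfold L; apply (le_INR 1) in HLpos; change (INR 1) with 1 in HLpos; lra).
    assert ((L - 1) * Phi <= 2 * ln (2 * INR k) * Phi) by (apply Rmult_le_compat_r; lra).
    assert (2 * ln (2 * INR k) * Phi <= 2 * ln (2 * INR k) * (3 / 2 * s))
      by (apply Rmult_le_compat_l; lra).
    set (P := s * ln (2 * INR k)).
    assert (HP : 1 <= P) by (unfold P; nra).
    assert (E1 : sqrt 2 * s * ln (2 * INR k) = sqrt 2 * P) by (unfold P; ring).
    assert (E2 : 2 * ln (2 * INR k) * (3 / 2 * s) = 3 * P) by (unfold P; field).
    assert (P <= sqrt 2 * P) by (rewrite <- (Rmult_1_l P) at 1; apply Rmult_le_compat_r; lra).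
    rewrite E1. lra.
Qed.
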